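(* For every pseudo-torsion class $\mathcal P\subseteq\mathcal G$, the class $\mathcal P^\perp$ is a pseudo-torsionfree class and ${}^\perp(\mathcal P^\perp)=\mathcal P$. Dually, for every pseudo-torsionfree class $\mathcal Q$, ${}^\perp\mathcal Q$ is a pseudo-torsion class and $({}^\perp\mathcal Q)^\perp=\mathcal Q$. Hence $\mathcal P\mapsto\mathcal P^\perp$ is a bijection from pseudo-torsion classes to pseudo-torsionfree classes with inverse $\mathcal Q\mapsto{}^\perp\mathcal Q$.
   Context: Let $\Lambda$ be a finite dimensional algebra over a field and $\mathrm{mod}\text-\Lambda$ the category of finitely generated right $\Lambda$-modules. Fix a torsion class $\mathcal G\subseteq\mathrm{mod}\text-\Lambda$, i.e. a class of modules closed under isomorphisms, extensions and quotients. For $B\in\mathcal G$, a subobject of $B$ is a submodule of $B$ that lies in $\mathcal G$. A subobject $A\subseteq B$ is a strict subobject if $A\cap B'\in\mathcal G$ for every subobject $B'$ of $B$. A strict quotient of $B$ is $B/A$ with $A$ a strict subobject. A short exact sequence $0\to A\to B\to C\to0$ with $A,B,C\in\mathcal G$ is strict exact (and $B$ a strict extension of $A$ by $C$) if the image of $A$ is a strict subobject of $B$. A strict morphism is a homomorphism $f:A\to B$ with $A,B\in\mathcal G$ such that $\ker f\in\mathcal G$ is a strict subobject of $A$ and $\operatorname{im} f$ is a strict subobject of $B$. A pseudo-torsion class is a nonempty class $\mathcal P\subseteq\mathcal G$ closed under strict quotients and strict extensions. A pseudo-torsionfree class is a nonempty class $\mathcal Q\subseteq\mathcal G$ closed under strict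 subobjects and strict extensions. For $\mathcal X\subseteq\mathcal G$, $\mathcal X^\perp$ is the class of $Y\in\mathcal G$ such that every strict morphism $X\to Y$ with $X\in\mathcal X$ is zero, and ${}^\perp\mathcal X$ is the class of $Y\in\mathcal G$ such that every strict morphism $Y\to X$ with $X\in\mathcal X$ is zero. *)

(* Defs.v *)
(* A finitely generated right A-module is a finite-dimensional
   F-space F^n (row vectors) with a right action v |-> v *m ract a, where
   ract : A -> 'M_n is an F-linear unital multiplicative map. *)
From HB Require Import structures.
From mathcomp Require Import all_boot all_order all_algebra all_field.
Set Implicit Arguments. Unset Strict Implicit. Unset Printing Implicit Defensive.
Import GRing.Theory.
Local Open Scope ring_scope.

Section Modules.
Variables (F : fieldType) (A : falgType F).

Record rmod := RMod {
  rdim : nat;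
  ract : A -> 'M[F]_rdim;
  ract_lin : forall (c : F) (a b : A), ract (c *: a + b) = c *: ract a + ract b;
  ract1 : ract 1 = 1%:M;
  ractM : forall a b : A, ract (a * b) = ract a *m ract b
}.

Definition hom (M N : rmod) (f : 'M[F]_(rdim M, rdim N)) : Prop :=
  forall a : A, ract M a *m f = f *m ract N a.

Definition iso (M N : rmod) : Prop :=
  exists (f : 'M[F]_(rdim M, rdim N)) (g : 'M[F]_(rdim N, rdim M)),
    [/\ hom f, hom g, f *m g = 1%:M & g *m f = 1%:M].

Definition ses (M N K : rmod) (f : 'M[F]_(rdim M, rdim N))
  (g : 'M[F]_(rdim N, rdim K)) : Prop :=
  [/\ hom f, hom g, row_free f, row_full g & (f == kermx g)%MS].

Definition mclass := rmod -> Prop.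

Definition torsion_class (G : mclass) : Prop :=
  [/\ (forall M N, iso M N -> G M -> G N),
      (forall M N K f g, @ses M N K f g -> G M -> G K -> G N) &
      (forall M N (g : 'M[F]_(rdim M, rdim N)), hom g -> row_full g -> G M -> G N)].

Variable G : mclass.

Definition submod (B : rmod) k (U : 'M[F]_(k, rdim B)) : Prop :=
  forall a : A, (U *m ract B a <= U)%MS.

Definition subobj (B : rmod) k (U : 'M[F]_(k, rdim B)) : Prop :=
  submod U /\
  exists (M : rmod) (f : 'M[F]_(rdim M, rdim B)),
    [/\ G M, hom f, row_free f & (f == U)%MS].

Definition strict_subobj (B : rmod) k (U : 'M[F]_(k, rdim B)) : Prop :=
  subobj U /\
  forall k' (V : 'M[F]_(k', rdim B)), subobj V -> subobj (U :&: V)%MS.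

Definition strict_quotient (B C : rmod) : Prop :=
  G B /\ G C /\
  exists g : 'M[F]_(rdim B, rdim C),
    [/\ hom g, row_full g & strict_subobj (kermx g)].

Definition strict_ext (M N K : rmod) : Prop :=
  G M /\ G N /\ G K /\
  exists f g, [/\ @ses M N K f g & strict_subobj f].

Definition strict_mor (M N : rmod) (f : 'M[F]_(rdim M, rdim N)) : Prop :=
  [/\ G M, G N, hom f, strict_subobj (kermx f) & strict_subobj f].

Definition pseudo_torsion (P : mclass) : Prop :=
  [/\ (exists M, P M), (forall M, P M -> G M),
      (forall B C, strict_quotient B C -> P B -> P C) &
      (forall M N K, strict_ext M N K -> P M -> P K -> P N)].

Definition pseudo_torsionfree (Q : mclass) : Prop :=
  [/\ (exists M, Q M), (forall M, Q M -> G M),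
      (forall B k (U : 'M[F]_(k, rdim B)), Q B -> strict_subobj U ->
          forall M (f : 'M[F]_(rdim M, rdim B)), G M -> hom f -> row_free f ->
          (f == U)%MS -> Q M) &
      (forall M N K, strict_ext M N K -> Q M -> Q K -> Q N)].

Definition perp (X : mclass) : mclass := fun Y =>
  G Y /\ forall X0, X X0 -> forall f : 'M[F]_(rdim X0, rdim Y),
    strict_mor f -> f = 0.

Definition lperp (X : mclass) : mclass := fun Y =>
  G Y /\ forall X0, X X0 -> forall f : 'M[F]_(rdim Y, rdim X0),
    strict_mor f -> f = 0.

End Modules.

(* Main.v *)
Require Import Defs.
From mathcomp Require Import all_boot all_order all_algebra all_field.
From Stdlib Require Import Classical.
From mathcomp Require Import zify.

Set Implicit Arguments. Unset Strict Implicit. Unset Printing Implicit Defensive.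
Import GRing.Theory.
Local Open Scope ring_scope.

Section Basic.
Variables (F : fieldType) (A : falgType F).
Local Notation rmod := (Defs.rmod A).
Local Notation hom := Defs.hom.
Local Notation submod := Defs.submod.

Lemma hom_mul (M N K : rmod) (f : 'M[F]_(rdim M, rdim N)) (g : 'M[F]_(rdim N, rdim K)) :
  hom f -> hom g -> hom (f *m g).
Proof. by move=> hf hg a; rewrite mulmxA hf -!mulmxA hg. Qed.

Lemma hom0 (M N : rmod) : hom (0 : 'M[F]_(rdim M, rdim N)).
Proof. by move=> a; rewrite mulmx0 mul0mx. Qed.

Lemma submod_eq (B : rmod) k k' (U : 'M[F]_(k, rdim B)) (V : 'M[F]_(k', rdim B)) :
  (U == V)%MS -> submod U -> submod V.
Proof.
move=> /eqmxP e sU a; rewrite -(eqmxMr _ e) -e; exact: sU.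
Qed.

Lemma submod_img (M B : rmod) (h : 'M[F]_(rdim M, rdim B)) : hom h -> submod h.
Proof. by move=> hh a; rewrite -hh submxMl. Qed.

Lemma submod_ker (M B : rmod) (h : 'M[F]_(rdim M, rdim B)) : hom h -> submod (kermx h).
Proof.
move=> hh a; rewrite sub_kermx -mulmxA hh mulmxA mulmx_ker mul0mx //.
Qed.

Lemma submod_full (B : rmod) : submod (1%:M : 'M[F]_(rdim B)).
Proof. by move=> a; rewrite submx1. Qed.

Lemma submod_zero (B : rmod) k : submod (0 : 'M[F]_(k, rdim B)).
Proof. by move=> a; rewrite mul0mx sub0mx. Qed.

Lemma submod_cap (B : rmod) k k' (U : 'M[F]_(k, rdim B)) (V : 'M[F]_(k', rdim B)) :
  submod U -> submod V -> submod (U :&: V)%MS.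
Proof.
move=> sU sV a; rewrite sub_capmx; apply/andP; split.
  exact: submx_trans (submxMr _ (capmxSl _ _)) (sU a).
exact: submx_trans (submxMr _ (capmxSr _ _)) (sV a).
Qed.

Lemma submod_add (B : rmod) k k' (U : 'M[F]_(k, rdim B)) (V : 'M[F]_(k', rdim B)) :
  submod U -> submod V -> submod (U + V)%MS.
Proof.
move=> sU sV a; rewrite addsmxMr; apply: addsmxS; [exact: sU | exact: sV].
Qed.

Definition preim m n k (h : 'M[F]_(m, n)) (S : 'M[F]_(k, n)) := kermx (h *m cokermx S).

Lemma sub_preim m n k p (h : 'M[F]_(m, n)) (S : 'M[F]_(k, n)) (x : 'M[F]_(p, m)) :
  (x <= preim h S)%MS = (x *m h <= S)%MS.
Proof. by rewrite sub_kermx submxE mulmxA. Qed.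

Lemma submod_preim (M B : rmod) k (h : 'M[F]_(rdim M, rdim B)) (S : 'M[F]_(k, rdim B)) :
  hom h -> submod S -> submod (preim h S).
Proof.
move=> hh sS a; rewrite sub_preim -mulmxA hh mulmxA.
apply: submx_trans (sS a); apply: submxMr; rewrite -sub_preim; exact: submx_refl.
Qed.

Lemma preim_capM m n k p (h : 'M[F]_(m, n)) (S : 'M[F]_(k, n)) (V : 'M[F]_(p, m)) :
  ((preim h S :&: V) *m h :=: S :&: (V *m h))%MS.
Proof.
apply/eqmxP/andP; split.
  rewrite sub_capmx -sub_preim capmxSl /=; exact: submxMr (capmxSr _ _).
case/submxP: (capmxSr S (V *m h)) => D eD.
rewrite {1}eD mulmxA; apply: submxMr; rewrite sub_capmx submxMl andbT sub_preim.
by rewrite -mulmxA -eD capmxSl.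
Qed.

Lemma preimM m n k (h : 'M[F]_(m, n)) (S : 'M[F]_(k, n)) :
  (preim h S *m h :=: S :&: h)%MS.
Proof.
have := preim_capM h S 1%:M; rewrite mul1mx => /eqmxP/andP[_ e].
apply/eqmxP/andP; split.
  by rewrite sub_capmx -sub_preim submx_refl submxMl.
apply: submx_trans e _; apply: submxMr; exact: capmxSl.
Qed.

Lemma hom_factor_inj (X M B : rmod) (e : 'M[F]_(rdim M, rdim B)) (k : 'M[F]_(rdim X, rdim B)) :
  hom e -> row_free e -> hom k -> (k <= e)%MS -> hom (k *m pinvmx e).
Proof.
move=> he fe hk ke a; apply: (row_free_inj fe).
rewrite -mulmxA (mulmxKpV ke) hk -[RHS]mulmxA he [RHS]mulmxA (mulmxKpV ke) //.
Qed.

Lemma hom_factor_surj (B C D : rmod) (p : 'M[F]_(rdim B, rdim C)) (k : 'M[F]_(rdim B, rdim D)) :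
  hom p -> row_full p -> hom k -> (kermx p <= kermx k)%MS ->
  hom (pinvmx p *m k) /\ p *m (pinvmx p *m k) = k.
Proof.
move=> hp fp hk kk.
have E : p *m (pinvmx p *m k) = k.
  apply/eqP; rewrite -subr_eq0 -{2}[k]mul1mx mulmxA -mulmxBl -sub_kermx.
  apply: submx_trans kk; rewrite sub_kermx mulmxBl mul1mx -mulmxA mulVpmx //.
  by rewrite mulmx1 subrr.
split=> // a; apply: (row_full_inj fp).
by rewrite mulmxA -hp -mulmxA E hk [RHS]mulmxA E.
Qed.

End Basic.

Set Implicit Arguments. Unset Strict Implicit. Unset Printing Implicit Defensive.
Import GRing.Theory.
Local Open Scope ring_scope.

Section Cons.
Variables (F : fieldType) (A : falgType F).
Local Notation rmod := (Defs.rmod A).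
Local Notation hom := Defs.hom.
Local Notation submod := Defs.submod.
Local Notation ses := Defs.ses.

Section Subm.
Variables (B : rmod) (r : nat) (E : 'M[F]_(r, rdim B)).
Hypotheses (fE : row_free E) (sE : submod E).
Definition subm_ract (a : A) : 'M[F]_r := E *m ract B a *m pinvmx E.
Lemma subm_lin c a b : subm_ract (c *: a + b) = c *: subm_ract a + subm_ract b.
Proof. by rewrite /subm_ract ract_lin mulmxDr mulmxDl -scalemxAr -scalemxAl. Qed.
Lemma subm_1 : subm_ract 1 = 1%:M.
Proof. by rewrite /subm_ract ract1 mulmx1 mulmxVp. Qed.
Lemma subm_M a b : subm_ract (a * b) = subm_ract a *m subm_ract b.
Proof.
have h := mulmxKpV (sE a); rewrite /subm_ract; move: (pinvmx E) h => P h.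
by rewrite ractM !mulmxA h.
Qed.
Definition subm : rmod := @RMod F A r subm_ract subm_lin subm_1 subm_M.
Lemma subm_hom : hom (M:=subm) (N:=B) E.
Proof. by move=> a; rewrite /= /subm_ract (mulmxKpV (sE a)). Qed.
End Subm.

Section Quot.
Variables (B : rmod) (m : nat) (Q : 'M[F]_(rdim B, m)).
Hypotheses (fQ : row_full Q) (sQ : submod (kermx Q)).
Definition quot_ract (a : A) : 'M[F]_m := pinvmx Q *m ract B a *m Q.
Lemma quot_key a : ract B a *m Q = Q *m quot_ract a.
Proof.
rewrite /quot_ract; have hP := mulVpmx fQ; move: (pinvmx Q) hP => P hP.
apply/eqP; rewrite -subr_eq0 !mulmxA -{1}[ract B a]mul1mx -!mulmxBl.
rewrite -sub_kermx; apply: submx_trans (sQ a); apply: submxMr.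
by rewrite sub_kermx mulmxBl mul1mx -mulmxA hP mulmx1 subrr.
Qed.
Lemma quot_lin c a b : quot_ract (c *: a + b) = c *: quot_ract a + quot_ract b.
Proof. by rewrite /quot_ract ract_lin mulmxDr mulmxDl -scalemxAr -scalemxAl. Qed.
Lemma quot_1 : quot_ract 1 = 1%:M.
Proof. by rewrite /quot_ract ract1 mulmx1 mulVpmx. Qed.
Lemma quot_M a b : quot_ract (a * b) = quot_ract a *m quot_ract b.
Proof.
transitivity (pinvmx Q *m (ract B a *m (ract B b *m Q))).
  by rewrite /quot_ract ractM !mulmxA.
rewrite quot_key (mulmxA (ract B a)) quot_key mulmxA mulmxA mulVpmx // mul1mx //.
Qed.
Definition quot : rmod := @RMod F A m quot_ract quot_lin quot_1 quot_M.
Lemma quot_hom : hom (M:=B) (N:=quot) Q.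
Proof. by move=> a; rewrite quot_key. Qed.
End Quot.

Lemma quot_exists (B : rmod) k (U : 'M[F]_(k, rdim B)) : submod U ->
  exists C (q : 'M[F]_(rdim B, rdim C)), [/\ hom q, row_full q & (kermx q == U)%MS].
Proof.
move=> sU; set Q := col_base (cokermx U).
have fQ : row_full Q by exact: col_base_full.
have kQ : (kermx Q == U)%MS.
  apply/andP; split.
    rewrite submxE.
    have -> : kermx Q *m cokermx U = kermx Q *m Q *m row_base (cokermx U).
      by rewrite -mulmxA mulmx_base.
    by rewrite mulmx_ker mul0mx.
  rewrite sub_kermx -(mulmx_free_eq0 _ (row_base_free (cokermx U))) -mulmxA mulmx_base.
  by rewrite -submxE.
have sQ : submod (kermx Q) by apply: submod_eq sU; apply/eqmxP; apply: eqmx_sym; apply/eqmxP.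
exists (quot fQ sQ), Q; split; [exact: quot_hom | exact: fQ | exact: kQ].
Qed.

Definition zract (a : A) : 'M[F]_0 := 0.
Lemma z_lin c a b : zract (c *: a + b) = c *: zract a + zract b.
Proof. by rewrite [LHS]flatmx0 [RHS]flatmx0. Qed.
Lemma z_1 : zract 1 = 1%:M.
Proof. by rewrite [LHS]flatmx0 [RHS]flatmx0. Qed.
Lemma z_M a b : zract (a * b) = zract a *m zract b.
Proof. by rewrite [LHS]flatmx0 [RHS]flatmx0. Qed.
Definition zmodule : rmod := @RMod F A 0 zract z_lin z_1 z_M.

End Cons.

Set Implicit Arguments. Unset Strict Implicit. Unset Printing Implicit Defensive.
Import GRing.Theory.
Local Open Scope ring_scope.

Section GClos.
Variables (F : fieldType) (A : falgType F) (G : mclass A).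
Hypothesis tG : torsion_class G.
Local Notation rmod := (Defs.rmod A).
Local Notation hom := Defs.hom.
Local Notation submod := Defs.submod.
Local Notation ses := Defs.ses.
Local Notation subobj := (Defs.subobj G).

Lemma G_quot (M N : rmod) (g : 'M[F]_(rdim M, rdim N)) : hom g -> row_full g -> G M -> G N.
Proof. move=> hg fg GM; case: tG => _ _ q; exact: q hg fg GM. Qed.

Lemma G_ext (M N K : rmod) f g : @ses _ _ M N K f g -> G M -> G K -> G N.
Proof. move=> s GM GK; case: tG => _ q _; exact: q s GM GK. Qed.

Lemma G_zero (M : rmod) : G M -> G (zmodule A).
Proof.
apply: (@G_quot M (zmodule A) 0); first exact: hom0.
by rewrite /row_full /= mxrank0.
Qed.

Lemma rank_free m n (e : 'M[F]_(m, n)) : row_free e -> \rank e = m.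
Proof. by move/eqP. Qed.

Lemma img_mod (M B : rmod) (h : 'M[F]_(rdim M, rdim B)) : G M -> hom h ->
  exists K (eK : 'M[F]_(rdim K, rdim B)) (c : 'M[F]_(rdim M, rdim K)),
    [/\ G K, hom eK, row_free eK & (eK == h)%MS] /\ [/\ hom c, row_full c & c *m eK = h].
Proof.
move=> GM hh; set E := row_base h.
have fE : row_free E := row_base_free h.
have sE : submod E by apply: submod_eq (submod_img hh); apply/eqmxP; apply: eqmx_sym; exact: eq_row_base.
have hE := subm_hom fE sE.
have hE' : (h <= E)%MS by rewrite eq_row_base.
exists (subm fE sE), E, (h *m pinvmx E).
have hc : hom (M:=M) (N:=subm fE sE) (h *m pinvmx E) by apply: hom_factor_inj.
have ceq : h *m pinvmx E *m E = h by rewrite mulmxKpV.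
have fc : row_full (h *m pinvmx E).
  rewrite /row_full /= -(mxrankMfree _ fE) ceq.
  by rewrite -(rank_free fE) eq_row_base.
split; split=> //; first exact: (G_quot hc fc GM).
by apply/eqmxP; exact: eq_row_base.
Qed.

Lemma img_sub (M B : rmod) (h : 'M[F]_(rdim M, rdim B)) : G M -> hom h -> subobj h.
Proof.
move=> GM hh; split; first exact: submod_img.
have [K [eK [c [[GK heK feK eKh] _]]]] := img_mod GM hh.
by exists K, eK.
Qed.

Lemma subobj_eq (B : rmod) k k' (U : 'M[F]_(k, rdim B)) (V : 'M[F]_(k', rdim B)) :
  (U == V)%MS -> subobj U -> subobj V.
Proof.
move=> eUV [sU [M [f [GM hf ff fU]]]]; split; first exact: submod_eq eUV sU.
exists M, f; split=> //.
move/eqmxP: fU => fU; move/eqmxP: eUV => eUV; apply/eqmxP; exact: eqmx_trans fU eUV.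
Qed.

Lemma subobj_submod (B : rmod) k (U : 'M[F]_(k, rdim B)) : subobj U -> submod U.
Proof. by case. Qed.

Lemma subobj_img (B C : rmod) k (U : 'M[F]_(k, rdim B)) (f : 'M[F]_(rdim B, rdim C)) :
  subobj U -> hom f -> subobj (U *m f).
Proof.
move=> [sU [M [e [GM he fe eU]]]] hf.
apply: (@subobj_eq _ _ _ (e *m f)); first by apply/eqmxP; apply: eqmxMr; apply/eqmxP.
exact: img_sub GM (hom_mul he hf).
Qed.

Lemma subobj_inj (M B : rmod) k (e : 'M[F]_(rdim M, rdim B)) (W : 'M[F]_(k, rdim M)) :
  hom e -> row_free e -> submod W -> subobj (W *m e) -> subobj W.
Proof.
move=> he fe sW [_ [N [n [GN hn fn nW]]]]; split=> //.
have ne : (n <= e)%MS by apply: submx_trans _ (submxMl W e); case/andP: nW.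
exists N, (n *m pinvmx e); split=> //.
- exact: hom_factor_inj.
- by rewrite /row_free -(mxrankMfree _ fe) mulmxKpV.
apply/eqmxP; apply: (eqmxMfree fe); rewrite mulmxKpV //; exact/eqmxP.
Qed.

Lemma subobj_ext (B C : rmod) k (W : 'M[F]_(k, rdim B)) (f : 'M[F]_(rdim B, rdim C)) :
  submod W -> hom f -> subobj (W :&: kermx f)%MS -> subobj (W *m f) -> subobj W.
Proof.
move=> sW hf [_ [M0 [e0 [GM0 he0 fe0 /eqmxP e0W]]]] [_ [K0 [eK [GK0 heK feK /eqmxP eKW]]]].
set E := row_base W.
have fE : row_free E := row_base_free W.
have sE : submod E by apply: submod_eq sW; apply/eqmxP; apply: eqmx_sym; exact: eq_row_base.
have hE := subm_hom fE sE.
set N := subm fE sE.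
have EfK : (E *m f <= eK)%MS.
  by rewrite eKW (eqmxMr _ (eq_row_base W)) submx_refl.
set g := E *m f *m pinvmx eK.
have hg : hom (M:=N) (N:=K0) g by apply: hom_factor_inj => //; exact: hom_mul.
have geK : g *m eK = E *m f by rewrite mulmxKpV.
have fg : row_full g.
  rewrite /row_full -(mxrankMfree _ feK) geK -(rank_free feK) eKW.
  by rewrite (eqmxMr _ (eq_row_base W)).
have e0E : (e0 <= E)%MS.
  by rewrite e0W eq_row_base capmxSl.
set f0 := e0 *m pinvmx E.
have hf0 : hom (M:=M0) (N:=N) f0 by apply: hom_factor_inj.
have f0E : f0 *m E = e0 by rewrite mulmxKpV.
have ff0 : row_free f0 by rewrite /row_free -(mxrankMfree _ fE) f0E.
have kg : (f0 == kermx g)%MS.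
  apply/andP; split.
    rewrite sub_kermx -(mulmx_free_eq0 _ feK) -mulmxA geK mulmxA f0E -sub_kermx.
    by rewrite e0W capmxSr.
  rewrite -(submxMfree _ _ fE) f0E e0W sub_capmx; apply/andP; split.
    by apply: submx_trans (submxMl _ E) _; rewrite /E eq_row_base.
  rewrite sub_kermx -mulmxA -geK mulmxA mulmx_ker mul0mx //.
have GN : G N by apply: (@G_ext M0 N K0 f0 g).
split=> //; exists N, E; split=> //.
by apply/eqmxP; exact: eq_row_base.
Qed.

End GClos.

Set Implicit Arguments. Unset Strict Implicit. Unset Printing Implicit Defensive.
Import GRing.Theory.
Local Open Scope ring_scope.

Section Strict.
Variables (F : fieldType) (A : falgType F) (G : mclass A).
Hypothesis tG : torsion_class G.
Local Notation rmod := (Defs.rmod A).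
Local Notation hom := Defs.hom.
Local Notation submod := Defs.submod.
Local Notation subobj := (Defs.subobj G).
Local Notation strict := (Defs.strict_subobj G).

Lemma cap_eql (B : rmod) k1 k2 k3 (U : 'M[F]_(k1, rdim B)) (U' : 'M[F]_(k2, rdim B)) (V : 'M[F]_(k3, rdim B)) :
  (U == U')%MS -> (U :&: V == U' :&: V)%MS.
Proof.
move/eqmxP=> e; apply/andP; split; rewrite sub_capmx capmxSr andbT.
  by rewrite -e capmxSl.
by rewrite e capmxSl.
Qed.

Lemma strict_eq (B : rmod) k k' (U : 'M[F]_(k, rdim B)) (V : 'M[F]_(k', rdim B)) :
  (U == V)%MS -> strict U -> strict V.
Proof.
move=> e [sU cU]; split; first exact: subobj_eq e sU.
move=> k'' W sW; apply: subobj_eq (cU _ _ sW); exact: cap_eql.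
Qed.

Lemma strict_sub (B : rmod) k (U : 'M[F]_(k, rdim B)) : strict U -> subobj U.
Proof. by case. Qed.

Lemma strict_submod (B : rmod) k (U : 'M[F]_(k, rdim B)) : strict U -> submod U.
Proof. by case=> [[]]. Qed.

Lemma hom1 (B : rmod) : hom (M:=B) (N:=B) 1%:M.
Proof. by move=> a; rewrite mulmx1 mul1mx. Qed.

Lemma subobj_full (B : rmod) : G B -> subobj (1%:M : 'M[F]_(rdim B)).
Proof. move=> GB; have := img_sub tG GB (hom1 B). exact. Qed.

Lemma strict_full (B : rmod) : G B -> strict (1%:M : 'M[F]_(rdim B)).
Proof.
move=> GB; split; first exact: subobj_full.
move=> k V sV; apply: subobj_eq sV.
by apply/andP; split; rewrite ?capmxSr // sub_capmx submx1 submx_refl.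
Qed.

Lemma subobj_zero (B : rmod) k : G B -> subobj (0 : 'M[F]_(k, rdim B)).
Proof.
move=> GB.
have := img_sub tG (G_zero tG GB) (hom0 (zmodule A) B).
by apply: subobj_eq; apply/andP; split; rewrite sub0mx.
Qed.

Lemma strict_zero (B : rmod) k : G B -> strict (0 : 'M[F]_(k, rdim B)).
Proof.
move=> GB; split; first exact: subobj_zero.
move=> k' V _; apply: subobj_eq (subobj_zero 0 GB).
by apply/andP; split; rewrite ?sub0mx // (submx_trans (capmxSl _ _)) ?sub0mx.
Qed.

Lemma strict_pull (M B : rmod) k (e : 'M[F]_(rdim M, rdim B)) (S : 'M[F]_(k, rdim B)) :
  G M -> hom e -> row_free e -> strict S -> strict (preim e S).
Proof.
move=> GM he fe [sS cS].
have smS : submod S by case: sS.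
have sp : submod (preim e S) by exact: submod_preim.
split.
  apply: (subobj_inj he fe sp).
  apply: subobj_eq (cS _ _ (img_sub tG GM he)); apply/eqmxP; apply: eqmx_sym; exact: preimM.
move=> k' V sV; apply: (subobj_inj he fe (submod_cap sp (subobj_submod sV))).
apply: subobj_eq (cS _ _ (subobj_img tG sV he)).
apply/eqmxP; apply: eqmx_sym; exact: preim_capM.
Qed.

Lemma strict_push_inj (M B : rmod) k (e : 'M[F]_(rdim M, rdim B)) (T : 'M[F]_(k, rdim M)) :
  G M -> hom e -> row_free e -> strict e -> strict T -> strict (T *m e).
Proof.
move=> GM he fe [se ce] [sT cT]; split; first exact: subobj_img.
move=> k' V sV.
have sW : subobj (preim e V).
  apply: (subobj_inj he fe (submod_preim he (subobj_submod sV))).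
  apply: subobj_eq (ce _ _ sV); rewrite capmxC; apply/eqmxP; apply: eqmx_sym; exact: preimM.
have := subobj_img tG (cT _ _ sW) he; rewrite capmxC.
apply: subobj_eq; rewrite [(T *m e :&: V)%MS]capmxC; apply/eqmxP; exact: preim_capM.
Qed.

Lemma strict_preim (X N : rmod) k (h : 'M[F]_(rdim X, rdim N)) (S : 'M[F]_(k, rdim N)) :
  G X -> hom h -> strict (kermx h) -> strict S -> strict (preim h S).
Proof.
move=> GX hh [skh ckh] [sS cS].
have sp : submod (preim h S) by apply: submod_preim hh (subobj_submod sS).
have kW : (kermx h <= preim h S)%MS by rewrite sub_preim mulmx_ker sub0mx.
split.
  apply: (subobj_ext tG sp hh).
    apply: subobj_eq skh; apply/andP; split; rewrite ?capmxSr // sub_capmx kW submx_refl //.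
  apply: subobj_eq (cS _ _ (img_sub tG GX hh)); apply/eqmxP; apply: eqmx_sym; exact: preimM.
move=> k' V sV; apply: (subobj_ext tG (submod_cap sp (subobj_submod sV)) hh).
  apply: subobj_eq (ckh _ _ sV); apply/andP; split; rewrite !sub_capmx.
    by rewrite (submx_trans (capmxSl _ _) kW) capmxSr capmxSl.
  rewrite capmxSr /=; exact: submx_trans (capmxSl _ _) (capmxSr _ _).
apply: subobj_eq (cS _ _ (subobj_img tG sV hh)); apply/eqmxP; apply: eqmx_sym; exact: preim_capM.
Qed.

Lemma strict_img (N Y : rmod) k (h : 'M[F]_(rdim N, rdim Y)) (S : 'M[F]_(k, rdim N)) :
  hom h -> subobj (kermx h) -> strict h -> strict S -> strict (S *m h).
Proof.
move=> hh skh [sh ch] [sS cS]; split; first exact: subobj_img.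
move=> k' V sV.
have sp : subobj (preim h V).
  apply: (subobj_ext tG (submod_preim hh (subobj_submod sV)) hh).
    apply: subobj_eq skh; apply/andP; split; rewrite ?capmxSr // sub_capmx submx_refl andbT.
    by rewrite sub_preim mulmx_ker sub0mx.
  apply: subobj_eq (ch _ _ sV); rewrite capmxC; apply/eqmxP; apply: eqmx_sym; exact: preimM.
have := subobj_img tG (cS _ _ sp) hh; rewrite capmxC.
apply: subobj_eq; rewrite [(S *m h :&: V)%MS]capmxC; apply/eqmxP; exact: preim_capM.
Qed.

End Strict.

Set Implicit Arguments. Unset Strict Implicit. Unset Printing Implicit Defensive.
Import GRing.Theory.

Local Close Scope ring_scope.
Lemma ex_max (Pn : nat -> Prop) n : Pn 0 -> (forall r, Pn r -> r <= n) ->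
  exists r, Pn r /\ forall s, Pn s -> s <= r.
Proof.
move=> P0 bnd.
suff H : forall d r, n - r <= d -> Pn r -> exists r', Pn r' /\ forall s, Pn s -> s <= r'.
  by apply: (H n 0) => //; rewrite subn0.
elim=> [|d IH] r hd Pr.
  exists r; split=> // s Ps; have := bnd _ Ps; move: hd; lia.
case: (classic (exists s, Pn s /\ r < s)) => [[s [Ps lt]]|no].
  apply: (IH s) => //; have := bnd _ Ps; move: hd lt; lia.
exists r; split=> // s Ps; rewrite leqNgt; apply/negP => lt; apply: no; by exists s.
Qed.

Lemma ex_min (Pn : nat -> Prop) n : Pn n -> exists r, Pn r /\ forall s, Pn s -> r <= s.
Proof.
move=> Pn0.
suff H : forall d r, r <= d -> Pn r -> exists r', Pn r' /\ forall s, Pn s -> r' <= s.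
  exact: (H n n).
elim=> [|d IH] r hd Pr.
  by exists r; split=> // s _; move: hd; rewrite leqn0 => /eqP ->.
case: (classic (exists s, Pn s /\ s < r)) => [[s [Ps lt]]|no].
  by apply: (IH s) => //; move: hd lt; lia.
exists r; split=> // s Ps; rewrite leqNgt; apply/negP => lt; apply: no; by exists s.
Qed.

Local Open Scope ring_scope.

Section Help.
Variables (F : fieldType) (A : falgType F) (G : mclass A).
Hypothesis tG : torsion_class G.
Local Notation rmod := (Defs.rmod A).
Local Notation hom := Defs.hom.
Local Notation submod := Defs.submod.
Local Notation subobj := (Defs.subobj G).
Local Notation strict := (Defs.strict_subobj G).

Lemma kermx_free m n p (h : 'M[F]_(m, n)) (f : 'M[F]_(n, p)) :
  row_free f -> (kermx (h *m f) == kermx h)%MS.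
Proof.
move=> ff; apply/andP; split; rewrite sub_kermx.
  by rewrite -(mulmx_free_eq0 _ ff) -mulmxA -sub_kermx submx_refl.
by rewrite mulmxA mulmx_ker mul0mx.
Qed.

Lemma kermx_preim m n p (h : 'M[F]_(m, n)) (g : 'M[F]_(n, p)) :
  (kermx (h *m g) == preim h (kermx g))%MS.
Proof.
apply/andP; split.
  by rewrite sub_preim sub_kermx -mulmxA -sub_kermx submx_refl.
by rewrite sub_kermx mulmxA -sub_kermx -sub_preim submx_refl.
Qed.

Lemma full_eq1 m n (g : 'M[F]_(m, n)) : row_full g -> (g == 1%:M)%MS.
Proof. by move=> fg; rewrite /eqmx submx1 sub1mx. Qed.

Lemma subm_G (B : rmod) r (E : 'M[F]_(r, rdim B)) (fE : row_free E) (sE : submod E) :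
  subobj E -> G (subm fE sE).
Proof.
move=> [_ [M [f [GM hf ff /eqmxP fE']]]].
have fEs : (f <= E)%MS by rewrite fE' submx_refl.
apply: (@G_quot _ _ _ tG M (subm fE sE) (f *m pinvmx E) _ _ GM).
  apply: hom_factor_inj => //; exact: subm_hom.
rewrite /row_full /= -(mxrankMfree _ fE) mulmxKpV // fE'.
by apply/eqP; exact: rank_free.
Qed.

End Help.

Set Implicit Arguments. Unset Strict Implicit. Unset Printing Implicit Defensive.
Import GRing.Theory.
Local Open Scope ring_scope.

Section PartA.
Variables (F : fieldType) (A : falgType F) (G : mclass A).
Hypothesis tG : torsion_class G.
Local Notation rmod := (Defs.rmod A).
Local Notation hom := Defs.hom.
Local Notation submod := Defs.submod.
Local Notation subobj := (Defs.subobj G).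
Local Notation strict := (Defs.strict_subobj G).
Local Notation smor := (Defs.strict_mor G).

Variable P : mclass A.
Hypothesis pP : pseudo_torsion G P.

Lemma A1 : pseudo_torsionfree G (perp G P).
Proof.
case: pP => [[M0 PM0] PG Pq Pe].
split.
- exists (zmodule A); split; first by have := G_zero tG (PG _ PM0).
  by move=> X0 _ f _; rewrite [f]thinmx0 [RHS]thinmx0.
- by move=> M [].
- move=> B k U [GB pB] sU M f GM hf ff fU; split=> // X0 PX0 h [GX _ hh skh sh].
  have smf : smor (h *m f).
    split=> //; first exact: hom_mul.
      by apply: strict_eq skh; apply/eqmxP; apply: eqmx_sym; apply/eqmxP; exact: kermx_free.
    apply: (@strict_push_inj _ _ _ tG _ _ _ f h GM hf ff _ sh).
    by apply: strict_eq sU; apply/eqmxP; apply: eqmx_sym; exact/eqmxP.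
  by apply/eqP; rewrite -(mulmx_free_eq0 _ ff) (pB _ PX0 _ smf).
move=> M N K [GM [GN [GK [f [g [[hf hg ff fg kg] sf]]]]]] [_ pM] [_ pK]; split=> //.
move=> X PX h [GX _ hh skh sh].
have sk : strict (kermx g) by apply: strict_eq sf.
have smg : smor (h *m g).
  split=> //; first exact: hom_mul.
    apply: strict_eq (strict_preim tG GX hh skh sk).
    by apply/eqmxP; apply: eqmx_sym; apply/eqmxP; exact: kermx_preim.
  apply: (@strict_img _ _ _ tG _ _ _ g h hg (strict_sub sk) _ sh).
  by apply: strict_eq (strict_full tG GK); apply/eqmxP; apply: eqmx_sym; apply/eqmxP; exact: full_eq1.
have hf0 : (h <= f)%MS.
  by move/eqmxP: kg => ->; rewrite sub_kermx (pK _ PX _ smg).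
have hh' : hom (M:=X) (N:=M) (h *m pinvmx f) by exact: hom_factor_inj.
have eh : h *m pinvmx f *m f = h by rewrite mulmxKpV.
have smh' : smor (h *m pinvmx f).
  split=> //.
    by apply: strict_eq skh; have := kermx_free (h *m pinvmx f) ff; rewrite eh.
  apply: strict_eq (strict_pull tG GM hf ff sh).
  apply/andP; split.
    by rewrite -(submxMfree _ _ ff) eh -sub_preim submx_refl.
  by rewrite sub_preim eh submx_refl.
by rewrite -eh (pM _ PX _ smh') mul0mx.
Qed.

Lemma P_zero : P (zmodule A).
Proof.
case: pP => [[M0 PM0] PG Pq Pe]; apply: (Pq M0 (zmodule A) _ PM0).
split; first exact: PG.
split; first by have := G_zero tG (PG _ PM0).
exists 0; split; first exact: hom0.
  by rewrite /row_full mxrank0.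
apply: strict_eq (strict_full tG (PG _ PM0)).
by apply/eqmxP; apply: eqmx_sym; exact: kermx0.
Qed.

Lemma A2 (M : rmod) : lperp G (perp G P) M -> P M.
Proof.
case: pP => [[M0 PM0] PG Pq Pe] [GM lM].
set n := rdim M.
pose TP (T : 'M[F]_n) := strict T /\ exists X (fT : 'M[F]_(rdim X, n)),
   [/\ P X, hom fT, row_free fT & (fT == T)%MS].
pose Pn r := exists T, TP T /\ \rank T = r.
have P0 : Pn 0%N.
  exists 0; split; last exact: mxrank0.
  split; first by have := strict_zero tG n GM.
  exists (zmodule A), 0; split; [exact: P_zero | exact: hom0 | | by rewrite /eqmx !sub0mx].
  by rewrite /row_free mxrank0.
have bnd : forall r, Pn r -> (r <= n)%N by move=> r [T [_ <-]]; exact: rank_leq_col.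
have [r [[T [[sT [X [fT [PX hfT ffT fTT]]]] rT]] maxr]] := ex_max P0 bnd.
have GX := PG _ PX.
have sTm : submod T := strict_submod sT.
have [Y [q [hq fq /eqmxP kq]]] := quot_exists sTm.
have GY : G Y := G_quot tG hq fq GM.
have skq : strict (kermx q) by apply: strict_eq sT; apply/eqmxP; apply: eqmx_sym.
have sq : strict q.
  by apply: strict_eq (strict_full tG GY); apply/eqmxP; apply: eqmx_sym; apply/eqmxP; exact: full_eq1.
have Tq0 : T *m q = 0 by apply/eqP; rewrite -sub_kermx kq submx_refl.
have fTT' : (fT :=: T)%MS by apply/eqmxP.
have fTq : fT *m q = 0 by apply/eqP; rewrite -sub_kermx fTT' kq submx_refl.
have perpY : perp G P Y.
  split=> // X' PX' h [GX' _ hh skh sh].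
  have sT' : strict (preim q h) := strict_preim tG GM hq skq sh.
  have TT' : (T <= preim q h)%MS by rewrite sub_preim Tq0 sub0mx.
  have [K0 [eK [c [[GK0 heK feK /eqmxP eKh] [hc fc ceK]]]]] := img_mod tG (PG _ PX') hh.
  have PK0 : P K0.
    apply: (Pq X' K0 _ PX'); split; first exact: PG.
    split=> //; exists c; split=> //.
    by apply: strict_eq skh; rewrite -ceK; exact: (kermx_free c feK).
  have fE : row_free (row_base (preim q h)) := row_base_free _.
  have sE : submod (row_base (preim q h)).
    by apply: submod_eq (strict_submod sT'); apply/eqmxP; apply: eqmx_sym; exact: eq_row_base.
  have hE := subm_hom fE sE.
  set E := row_base (preim q h) in fE sE hE.
  set N0 := subm fE sE.
  have ET' : (E :=: preim q h)%MS := eq_row_base _.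
  have fTE : (fT <= E)%MS by rewrite ET' fTT'.
  have hf0 : hom (M:=X) (N:=N0) (fT *m pinvmx E) by apply: hom_factor_inj.
  set f0 := fT *m pinvmx E in hf0.
  have f0E : f0 *m E = fT by rewrite mulmxKpV.
  have ff0 : row_free f0 by rewrite /row_free -(mxrankMfree _ fE) f0E.
  have hq1 : (h <= q)%MS by rewrite submx_full.
  have Eqh : (E *m q <= eK)%MS.
    by rewrite (eqmxMr q ET') eKh -sub_preim submx_refl.
  have hg0 : hom (M:=N0) (N:=K0) (E *m q *m pinvmx eK).
    by apply: hom_factor_inj => //; exact: hom_mul.
  set g0 := E *m q *m pinvmx eK in hg0.
  have g0eK : g0 *m eK = E *m q by rewrite mulmxKpV.
  have fg0 : row_full g0.
    rewrite /row_full -(mxrankMfree _ feK) g0eK (eqmxMr q ET') (preimM q h).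
    by rewrite (elimT capmx_idPl hq1) -eKh (rank_free feK).
  have kg0 : (f0 == kermx g0)%MS.
    apply/andP; split.
      by rewrite sub_kermx -(mulmx_free_eq0 _ feK) -mulmxA g0eK mulmxA f0E fTq.
    rewrite -(submxMfree _ _ fE) f0E fTT' -kq sub_kermx -mulmxA -g0eK mulmxA.
    by rewrite mulmx_ker mul0mx.
  have ses0 : ses (M:=X) (N:=N0) (K:=K0) f0 g0 by split.
  have GN0 : G N0 := G_ext tG ses0 GX GK0.
  have sf0 : Defs.strict_subobj G (B:=N0) f0.
    apply: strict_eq (strict_pull tG GN0 hE fE sT).
    apply/andP; split.
      by rewrite -(submxMfree _ _ fE) f0E fTT' -sub_preim submx_refl.
    by rewrite sub_preim f0E fTT' submx_refl.
  have PN0 : P N0.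
    apply: (Pe X N0 K0) => //; split=> //; split=> //; split=> //; exists f0, g0; split=> //.
  have TPT' : Pn (\rank (preim q h)).
    exists (preim q h); split=> //; split=> //; exists N0, E; split=> //; exact/eqmxP.
  have eTT' : (T == preim q h)%MS.
    by rewrite -(geq_leqif (mxrank_leqif_eq TT')) rT; exact: maxr.
  have : (h <= T *m q)%MS.
    apply: (@submx_trans _ _ _ _ _ _ (preim q h *m q)).
      by rewrite (preimM q h) sub_capmx submx_refl hq1.
    by apply: submxMr; move/eqmxP: eTT' => e; rewrite -e submx_refl.
  by rewrite Tq0 => /submx0null.
have smq : smor q by split.
have q0 := lM _ perpY q smq.
have T1 : (1%:M <= T)%MS by rewrite -kq q0 kermx0 submx_refl.
apply: (Pq X M _ PX); split=> //; split=> //; exists fT; split=> //.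
  by rewrite -sub1mx fTT' T1.
have : kermx fT == 0 by rewrite kermx_eq0.
by move/eqP=> ->; have := strict_zero tG (rdim X) GX.
Qed.
End PartA.

Set Implicit Arguments. Unset Strict Implicit. Unset Printing Implicit Defensive.
Import GRing.Theory.
Local Open Scope ring_scope.

Section PartB.
Variables (F : fieldType) (A : falgType F) (G : mclass A).
Hypothesis tG : torsion_class G.
Local Notation rmod := (Defs.rmod A).
Local Notation hom := Defs.hom.
Local Notation submod := Defs.submod.
Local Notation subobj := (Defs.subobj G).
Local Notation strict := (Defs.strict_subobj G).
Local Notation smor := (Defs.strict_mor G).

Variable Q : mclass A.
Hypothesis pQ : pseudo_torsionfree G Q.

Lemma strict_g1 (K : rmod) m (g : 'M[F]_(m, rdim K)) : G K -> row_full g -> strict g.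
Proof.
move=> GK fg; apply: strict_eq (strict_full tG GK).
by apply/eqmxP; apply: eqmx_sym; apply/eqmxP; exact: full_eq1.
Qed.

Lemma B1 : pseudo_torsion G (lperp G Q).
Proof.
case: pQ => [[M0 QM0] QG Qs Qe].
split.
- exists (zmodule A); split; first by have := G_zero tG (QG _ QM0).
  by move=> X0 _ f _; rewrite [f]flatmx0 [RHS]flatmx0.
- by move=> M [].
- move=> B C [GB [GC [g [hg fg skg]]]] [_ lB]; split=> // Y QY h [_ GY hh skh sh].
  have smg : smor (g *m h).
    split=> //; first exact: hom_mul.
      apply: strict_eq (strict_preim tG GB hg skg skh).
      by apply/eqmxP; apply: eqmx_sym; apply/eqmxP; exact: kermx_preim.
    by apply: strict_eq sh; apply/eqmxP; apply: eqmx_sym; exact: eqmxMfull.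
  by apply: (row_full_inj fg); rewrite mulmx0 (lB _ QY _ smg).
move=> M N K [GM [GN [GK [f [g [[hf hg ff fg /eqmxP kg] sf]]]]]] [_ lM] [_ lK]; split=> //.
move=> Y QY h [_ GY hh skh sh].
have smf : smor (f *m h).
  split=> //; first exact: hom_mul.
    apply: strict_eq (strict_pull tG GM hf ff skh).
    by apply/eqmxP; apply: eqmx_sym; apply/eqmxP; exact: kermx_preim.
  exact: (@strict_img _ _ _ tG _ _ _ h f hh (strict_sub skh) sh sf).
have fh : (kermx g <= kermx h)%MS.
  by rewrite -kg sub_kermx (lM _ QY _ smf).
have [hh' gh'] := hom_factor_surj hg fg hh fh.
set h' := pinvmx g *m h in hh' gh'.
have smh' : smor h'.
  split=> //.
    apply: (@strict_eq _ _ _ _ _ _ (kermx h *m g)).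
      apply/andP; split.
        by rewrite sub_kermx -mulmxA gh' mulmx_ker.
      have xg := mulmxKpV (submx_full (kermx h') fg).
      rewrite -xg; apply: submxMr.
      by rewrite sub_kermx -gh' mulmxA xg mulmx_ker.
    exact: (@strict_img _ _ _ tG _ _ _ g (kermx h) hg (strict_sub (strict_eq (introT eqmxP kg) sf)) (strict_g1 GK fg) skh).
  apply: strict_eq sh; rewrite -gh'; apply/eqmxP; exact: eqmxMfull.
by rewrite -gh' (lK _ QY _ smh') mulmx0.
Qed.

Lemma Q_zero : Q (zmodule A).
Proof.
case: pQ => [[M0 QM0] QG Qs Qe].
have GM0 := QG _ QM0.
apply: (Qs M0 _ (0 : 'M_(rdim M0)) QM0 _ (zmodule A) 0).
- by have := strict_zero tG (rdim M0) GM0.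
- by have := G_zero tG GM0.
- exact: hom0.
- by rewrite /row_free mxrank0.
by rewrite /eqmx !sub0mx.
Qed.

Lemma B2 (Y : rmod) : perp G (lperp G Q) Y -> Q Y.
Proof.
case: pQ => [[M0 QM0] QG Qs Qe] [GY pY].
set n := rdim Y.
pose QQ (U : 'M[F]_n) := strict U /\ exists C (g : 'M[F]_(n, rdim C)),
   [/\ Q C, hom g, row_full g & (kermx g == U)%MS].
pose Pn r := exists U, QQ U /\ \rank U = r.
have Pnn : Pn (\rank (1%:M : 'M[F]_n)).
  exists 1%:M; split=> //; split; first exact: strict_full.
  exists (zmodule A), 0; split; [exact: Q_zero | exact: hom0 | | ].
    by rewrite /row_full mxrank0.
  by apply/eqmxP; exact: kermx0.
have [r [[U [[sU [C [g [QC hg fg /eqmxP kg]]]] rU]] minr]] := ex_min Pnn.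
have GC := QG _ QC.
have fE : row_free (row_base U) := row_base_free _.
have sE : submod (row_base U).
  by apply: submod_eq (strict_submod sU); apply/eqmxP; apply: eqmx_sym; exact: eq_row_base.
have hE := subm_hom fE sE.
set E := row_base U in fE sE hE.
set N0 := subm fE sE.
have EU : (E :=: U)%MS := eq_row_base _.
have GN0 : G N0.
  apply: (subm_G tG); apply: subobj_eq (strict_sub sU); apply/eqmxP; exact: eqmx_sym.
have sEs : Defs.strict_subobj G (B:=Y) E by apply: strict_eq sU; apply/eqmxP; exact: eqmx_sym.
have Eg0 : E *m g = 0 by apply/eqP; rewrite -sub_kermx kg EU submx_refl.
have lN0 : lperp G Q N0.
  split=> // Z QZ h [_ GZ hh skh sh].
  have sW : strict (kermx h *m E) := strict_push_inj tG GN0 hE fE sEs skh.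
  have [C' [qW [hqW fqW /eqmxP kqW]]] := quot_exists (strict_submod sW).
  have GC' : G C' := G_quot tG hqW fqW GY.
  have [Kh [eK [c [[GKh heK feK /eqmxP eKh] [hc fc ceK]]]]] := img_mod tG GN0 hh.
  have QKh : Q Kh by apply: (Qs Z _ h QZ sh Kh eK) => //; exact/eqmxP.
  have kc : (kermx c :=: kermx h)%MS.
    by apply/eqmxP; rewrite -ceK; apply/eqmxP; apply: eqmx_sym; apply/eqmxP; exact: kermx_free.
  have ck : (kermx c <= kermx (E *m qW))%MS.
    by rewrite kc sub_kermx mulmxA -sub_kermx kqW submx_refl.
  have [hf0 cf0] := hom_factor_surj hc fc (hom_mul hE hqW) ck.
  set f0 := pinvmx c *m (E *m qW) in hf0 cf0.
  have ff0 : row_free f0.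
    rewrite -kermx_eq0; apply/eqP.
    have xc := mulmxKpV (submx_full (kermx f0) fc).
    have x0 : kermx f0 *m pinvmx c *m c = 0.
      apply/eqP; rewrite -sub_kermx kc -(submxMfree _ _ fE) -kqW sub_kermx.
      by rewrite -mulmxA -cf0 mulmxA xc mulmx_ker.
    by rewrite -xc x0.
  have kqg : (kermx qW <= kermx g)%MS.
    by rewrite kqW kg -EU submxMl.
  have [hg0 qg0] := hom_factor_surj hqW fqW hg kqg.
  set g0 := pinvmx qW *m g in hg0 qg0.
  have fg0 : row_full g0.
    rewrite /row_full eqn_leq rank_leq_col /= -{1}(eqP fg).
    by rewrite -qg0 mxrankM_maxr.
  have f0e : (f0 :=: E *m qW)%MS by rewrite -cf0; apply: eqmx_sym; exact: eqmxMfull.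
  have kg0 : (f0 == kermx g0)%MS.
    apply/andP; split.
      rewrite sub_kermx; apply/eqP.
      by rewrite /f0 -(mulmxA (pinvmx c)) -(mulmxA E) qg0 Eg0 mulmx0.
    have xq := mulmxKpV (submx_full (kermx g0) fqW).
    rewrite -xq f0e; apply: submxMr.
    by rewrite EU -kg sub_kermx -qg0 mulmxA xq mulmx_ker.
  have ses0 : ses (M:=Kh) (N:=C') (K:=C) f0 g0 by split.
  have sf0 : Defs.strict_subobj G (B:=C') f0.
    have skqW : subobj (kermx qW).
      by apply: strict_sub; apply: strict_eq sW; apply/eqmxP; exact: eqmx_sym.
    apply: strict_eq (@strict_img _ _ _ tG _ _ _ qW U hqW skqW (strict_g1 GC' fqW) sU).
    apply/eqmxP; exact: eqmx_trans (eqmxMr qW (eqmx_sym EU)) (eqmx_sym f0e).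
  have QC' : Q C'.
    apply: (Qe Kh C' C) => //; split; first exact: QG.
    by split=> //; split=> //; exists f0, g0.
  have PW : Pn (\rank (kermx h *m E)).
    exists <<kermx h *m E>>%MS; split; last by rewrite genmxE.
    split; first by apply: strict_eq sW; apply/eqmxP; apply: eqmx_sym; exact: genmxE.
    exists C', qW; split=> //; apply/eqmxP; exact: eqmx_trans kqW (eqmx_sym (genmxE _)).
  have WU : (kermx h *m E <= U)%MS by rewrite -EU submxMl.
  have eWU : (kermx h *m E == U)%MS.
    by rewrite -(geq_leqif (mxrank_leqif_eq WU)) rU; exact: minr.
  have : (1%:M *m E <= kermx h *m E)%MS.
    by rewrite mul1mx; move/eqmxP: eWU => e; rewrite e EU submx_refl.
  by rewrite submxMfree // sub_kermx mul1mx => /eqP.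
have smE : smor (M:=N0) (N:=Y) E.
  split=> //.
  have : kermx E == 0 by rewrite kermx_eq0.
  by move/eqP=> ->; have := strict_zero tG (rdim N0) GN0.
have E0 := pY _ lN0 E smE.
have rU0 : \rank U = 0%N by rewrite -EU E0 mxrank0.
have kg0 : kermx g == 0 by rewrite -mxrank_eq0 kg rU0.
apply: (Qs C _ 1%:M QC (strict_full tG GC) Y g GY hg).
  by rewrite -kermx_eq0.
exact: full_eq1.
Qed.
End PartB.

Theorem mainTheorem8 (F : fieldType) (A : falgType F) (G : mclass A) :
  torsion_class G ->
  (forall P : mclass A, pseudo_torsion G P ->
     pseudo_torsionfree G (perp G P) /\
     (forall M, lperp G (perp G P) M <-> P M)) /\
  (forall Q : mclass A, pseudo_torsionfree G Q ->
     pseudo_torsion G (lperp G Q) /\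
     (forall M, perp G (lperp G Q) M <-> Q M)).
Proof.
move=> tG; split.
- move=> P pP; split; first exact: (A1 tG pP).
  move=> M; split; first exact: (A2 tG pP).
  move=> PM; split; first by case: pP => _ PG _ _; exact: PG.
  by move=> X0 [_ pX] f sf; exact: pX _ PM _ sf.
- move=> Q pQ; split; first exact: (B1 tG pQ).
  move=> M; split; first exact: (B2 tG pQ).
  move=> QM; split; first by case: pQ => _ QG _ _; exact: QG.
  by move=> X0 [_ lX] f sf; exact: lX _ QM _ sf.
Qed.
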